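(* Let $p=p_1p_2\cdots p_n$ be a permutation avoiding the pattern $1324$, and let $w(p)$ and $z(p)$ be the two words of length $n$ over $\{A,B,C,D\}$ defined in the context. Then for all $i\geq 1$ and all $k\geq 1$: if the $i$th letter $A$ from the right in $w(p)$ is in the middle of a $CAB^k$-factor (i.e., it is immediately preceded by a letter $C$ and immediately followed by $k$ consecutive letters $B$), then the $i$th segment of $z(p)$ from the left contains at least $k$ letters $B$.
   Context: A permutation $p$ avoids $1324$ if there are no indices $i_1<i_2<i_3<i_4$ with $p_{i_1}<p_{i_3}<p_{i_2}<p_{i_4}$. An entry $p_i$ is a left-to-right minimum if it is smaller than all entries to its left, and a right-to-left maximum if it is larger than all entries to its right (these notions are also applied to subsequences). Coloring: scan $p$ from left to right; color $p_i$ blue if coloring it red would create a $132$-pattern consisting entirely of red entries (among the previously colored red entries together with $p_i$); otherwise color $p_i$ red. Then mark each entry with a letter: (1) a red entry that is a left-to-right minimum of the subsequence of red entries gets $A$; (2) a red entry that is not such a left-to-right minimum gets $B$; (3) a blue entry that is not a right-to-left maximum of the subsequence of blue entries gets $C$; (4) a blue entry that is a right-to-left maximum of the subsequence of blue entries gets $D$; (4') finally, every entry that is a right-to-left maximum of all of $p$ but not a left-to-right minimum of $p$ is colored blue and marked $D$, regardless of the earlier rules. The word $w(p)$ has as its $i$th letter the letter of $p_i$; the word $z(p)$ has as its $i$th letter the letter of the entry of value $i$. A segment of a word $v$ over $\{A,B,C,D\}$ is a factor (consecutive letters) that starts with a letter $A$ and ends immediately before the next letter $A$, or at the end of $v$.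 The $i$th segment from the left is the one starting at the $i$th letter $A$ from the left. *)

(* Defs.v *)
(* Permutations are sequences of naturals that are
   rearrangements of 1..n; positions are 0-indexed internally. *)
From HB Require Import structures.
From mathcomp Require Import all_boot.
Set Implicit Arguments. Unset Strict Implicit. Unset Printing Implicit Defensive.

Inductive letter := LA | LB | LC | LD.

Definition letter_eqb (x y : letter) : bool :=
  match x, y with
  | LA, LA | LB, LB | LC, LC | LD, LD => true
  | _, _ => false
  end.

Lemma letter_eqP : Equality.axiom letter_eqb.
Proof. by case; case; constructor. Qed.

HB.instance Definition _ := hasDecEq.Build letter letter_eqP.

Definition is_perm (p : seq nat) : bool := perm_eq p (iota 1 (size p)).

Definition avoids1324 (p : seq nat) : bool :=
  ~~ [exists i1 : 'I_(size p), exists i2 : 'I_(size p),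
      exists i3 : 'I_(size p), exists i4 : 'I_(size p),
      [&& (i1 < i2)%N, (i2 < i3)%N, (i3 < i4)%N,
          (nth 0 p i1 < nth 0 p i3)%N, (nth 0 p i3 < nth 0 p i2)%N
        & (nth 0 p i2 < nth 0 p i4)%N]].

Definition has132 (s : seq nat) : bool :=
  [exists a : 'I_(size s), exists b : 'I_(size s), exists c : 'I_(size s),
    [&& (a < b)%N, (b < c)%N, (nth 0 s a < nth 0 s c)%N
      & (nth 0 s c < nth 0 s b)%N]].

(* left-to-right scan: reds = previously red-coloured entries (in order);
   returns true for red, false for blue *)
Fixpoint color_aux (reds rest : seq nat) : seq bool :=
  match rest with
  | [::] => [::]
  | x :: r => if has132 (rcons reds x) then false :: color_aux reds r
              else true :: color_aux (rcons reds x) r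
  end.

Definition colors (p : seq nat) : seq bool := color_aux [::] p.

Definition is_red (p : seq nat) (i : nat) : bool := nth false (colors p) i.

Definition lr_min (p : seq nat) (i : nat) : bool :=
  [forall j : 'I_(size p), (j < i)%N ==> (nth 0 p i < nth 0 p j)%N].

Definition rl_max (p : seq nat) (i : nat) : bool :=
  [forall j : 'I_(size p), (i < j)%N ==> (nth 0 p j < nth 0 p i)%N].

Definition red_lr_min (p : seq nat) (i : nat) : bool :=
  [forall j : 'I_(size p), ((j < i)%N && is_red p j) ==> (nth 0 p i < nth 0 p j)%N].

Definition blue_rl_max (p : seq nat) (i : nat) : bool :=
  [forall j : 'I_(size p), ((i < j)%N && ~~ is_red p j) ==> (nth 0 p j < nth 0 p i)%N].

(* the letter of the entry at position i; rule (4') overrides rules (1)-(4) *)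
Definition letter_at (p : seq nat) (i : nat) : letter :=
  if rl_max p i && ~~ lr_min p i then LD
  else if is_red p i then (if red_lr_min p i then LA else LB)
  else (if blue_rl_max p i then LD else LC).

Definition wword (p : seq nat) : seq letter := mkseq (letter_at p) (size p).

Definition zword (p : seq nat) : seq letter :=
  mkseq (fun v => letter_at p (index v.+1 p)) (size p).

Definition A_positions (v : seq letter) : seq nat :=
  [seq j <- iota 0 (size v) | nth LA v j == LA].

(* the i-th segment from the left (i >= 1) of v: from the i-th A up to
   (not including) the next A, or to the end of v *)
Definition segment (v : seq letter) (i : nat) : seq letter :=
  let s := nth 0 (A_positions v) i.-1 in
  let e := if (i < size (A_positions v))%N then nth 0 (A_positions v) i
           else size v in
  drop s (take e v).

(* Main.v *)
Require Import Defs.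
From mathcomp Require Import all_boot zify.
Set Implicit Arguments. Unset Strict Implicit. Unset Printing Implicit Defensive.


Lemma color_aux_size reds rest : size (color_aux reds rest) = size rest.
Proof.
elim: rest reds => [|x r IH] reds //=.
by case: has132 => /=; rewrite IH.
Qed.

Lemma color_aux_nth reds rest i : i < size rest ->
  nth false (color_aux reds rest) i =
  ~~ has132 (rcons (reds ++ [seq nth 0 rest t | t <- iota 0 i &
                          nth false (color_aux reds rest) t]) (nth 0 rest i)).
Proof.
elim: rest reds i => [|x r IH] reds i //= Hi.
case: i Hi => [|i] Hi /=.
  by rewrite cats0; case: has132.
have Hi' : i < size r by [].
have E : forall (c : seq bool) (b : bool),
  [seq nth 0 (x :: r) t | t <- iota 1 i & nth false (b :: c) t] =
  [seq nth 0 r t | t <- iota 0 i & nth false c t].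
  move=> c b; rewrite -[1]/(1 + 0) iotaDl filter_map -map_comp.
  by apply: eq_map.
case H: has132 => /=.
  by rewrite E IH.
by rewrite E IH // cat_rcons.
Qed.

Definition redsTo (p : seq nat) j := [seq nth 0 p t | t <- iota 0 j & is_red p t].

Lemma red_char p j : j < size p ->
  is_red p j = ~~ has132 (rcons (redsTo p j) (nth 0 p j)).
Proof. by move=> Hj; rewrite /is_red /colors color_aux_nth. Qed.

Lemma is_red_size p j : is_red p j -> j < size p.
Proof.
rewrite /is_red /colors; case: ltnP => // H.
by rewrite nth_default // color_aux_size.
Qed.

Lemma has132P s : reflect (exists a b c, [/\ a < b, b < c, c < size s,
   nth 0 s a < nth 0 s c & nth 0 s c < nth 0 s b]) (has132 s).
Proof.
apply: (iffP existsP).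
  case=> a /existsP[b /existsP[c /and4P[H1 H2 H3 H4]]].
  by exists a, b, c; split.
case=> a [b [c [H1 H2 H3 H4 H5]]].
have Ha : a < size s by lia.
have Hb : b < size s by lia.
exists (Ordinal Ha); apply/existsP; exists (Ordinal Hb); apply/existsP.
by exists (Ordinal H3); apply/and4P.
Qed.

Lemma redsTo_free p j : ~~ has132 (redsTo p j).
Proof.
elim: j => [|j IH].
  by apply/has132P => -[a [b [c [_ _ H _ _]]]].
rewrite /redsTo -addn1 iotaD filter_cat map_cat /=.
case Hr: (is_red p j) => /=; last by rewrite cats0.
by rewrite cats1 -red_char // is_red_size.
Qed.

Lemma has132_rcons s x : ~~ has132 s -> has132 (rcons s x) ->
  exists a b, [/\ a < b, b < size s, nth 0 s a < x & x < nth 0 s b].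
Proof.
move=> Hs /has132P[a [b [c [H1 H2 H3 H4 H5]]]].
rewrite size_rcons in H3.
rewrite !nth_rcons in H4 H5.
have Ha : a < size s by lia.
have Hb : b < size s by lia.
rewrite Ha Hb in H4 H5.
case: (ltnP c (size s)) => Hc.
  rewrite Hc in H4 H5; case/negP: Hs; apply/has132P.
  by exists a, b, c; split.
have Ec : c = size s by lia.
rewrite Ec ltnn eqxx in H4 H5.
by exists a, b; split.
Qed.

Lemma has132_rcons_intro s x a b : a < b -> b < size s ->
  nth 0 s a < x -> x < nth 0 s b -> has132 (rcons s x).
Proof.
move=> H1 H2 H3 H4; apply/has132P; exists a, b, (size s).
rewrite size_rcons !nth_rcons ltnn eqxx (ltn_trans H1 H2) H2; split => //.
Qed.

Definition redpos (p : seq nat) j := [seq t <- iota 0 j | is_red p t].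

Lemma redpos_sorted p j : sorted ltn (redpos p j).
Proof. by apply: sorted_filter; [apply: ltn_trans | apply: iota_ltn_sorted]. Qed.

Lemma mem_redpos p j t : (t \in redpos p j) = is_red p t && (t < j).
Proof. by rewrite mem_filter mem_iota. Qed.

Lemma blue_wit p j : j < size p -> ~~ is_red p j ->
  exists a b, [/\ a < b, b < j, is_red p a, is_red p b &
    nth 0 p a < nth 0 p j < nth 0 p b].
Proof.
move=> Hj; rewrite red_char // negbK => H.
have [a' [b' [H1 H2 H3 H4]]] := has132_rcons (redsTo_free p j) H.
rewrite /redsTo size_map -/(redpos p j) in H2.
rewrite /redsTo -/(redpos p j) (nth_map 0) in H3; last exact: ltn_trans H1 H2.
rewrite /redsTo -/(redpos p j) (nth_map 0) in H4; last exact: H2.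
have Ma : nth 0 (redpos p j) a' \in redpos p j by apply: mem_nth; exact: ltn_trans H1 H2.
have Mb : nth 0 (redpos p j) b' \in redpos p j by apply: mem_nth.
rewrite !mem_redpos in Ma Mb.
case/andP: Ma => Ra La; case/andP: Mb => Rb Lb.
exists (nth 0 (redpos p j) a'), (nth 0 (redpos p j) b'); split => //.
  apply: (sorted_ltn_nth ltn_trans) => //; first exact: redpos_sorted.
    exact: ltn_trans H1 H2.
by rewrite H3 H4.
Qed.

Lemma red_no p j a b : is_red p j -> a < b -> b < j -> is_red p a -> is_red p b ->
  ~~ (nth 0 p a < nth 0 p j < nth 0 p b).
Proof.
move=> Hr H1 H2 Ra Rb; apply/negP => /andP[H3 H4].
have Hj := is_red_size Hr.
move: Hr; rewrite red_char // => /negP; apply.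
have Ma : a \in redpos p j by rewrite mem_redpos Ra; lia.
have Mb : b \in redpos p j by rewrite mem_redpos Rb.
have Sa : index a (redpos p j) < size (redpos p j) by rewrite index_mem.
have Sb : index b (redpos p j) < size (redpos p j) by rewrite index_mem.
have Hab : index a (redpos p j) < index b (redpos p j).
  case: (ltngtP (index a (redpos p j)) (index b (redpos p j))) => // H.
    have := sorted_ltn_nth ltn_trans 0 (redpos_sorted p j).
    move=> /(_ (index b (redpos p j)) (index a (redpos p j)) Sb Sa H).
    rewrite !nth_index //; lia.
  have : nth 0 (redpos p j) (index a (redpos p j)) = nth 0 (redpos p j) (index b (redpos p j)) by rewrite H.
  rewrite !nth_index //; lia.
apply: (has132_rcons_intro (a := index a (redpos p j)) (b := index b (redpos p j))) => //.
- by rewrite /redsTo size_map.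
- by rewrite /redsTo -/(redpos p j) (nth_map 0) // nth_index.
- by rewrite /redsTo -/(redpos p j) (nth_map 0) // nth_index.
Qed.


Lemma perm_uniqp p : is_perm p -> uniq p.
Proof. by move=> H; rewrite (perm_uniq H) iota_uniq. Qed.

Lemma perm_memp p x : is_perm p -> (x \in p) = (0 < x <= size p).
Proof. by move=> H; rewrite (perm_mem H) mem_iota; lia. Qed.

Lemma perm_nth p t : is_perm p -> t < size p -> 0 < nth 0 p t <= size p.
Proof. by move=> H Ht; rewrite -perm_memp // mem_nth. Qed.

Lemma perm_inj p a b : is_perm p -> a < size p -> b < size p ->
  nth 0 p a = nth 0 p b -> a = b.
Proof.
move=> H Ha Hb E.
by rewrite -(index_uniq 0 Ha (perm_uniqp H)) E index_uniq // perm_uniqp.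
Qed.

Lemma lr_minE p i t : lr_min p i -> t < i -> i < size p -> nth 0 p i < nth 0 p t.
Proof.
move=> /forallP H Hti Hi.
have Ht : t < size p by lia.
by have := H (Ordinal Ht); rewrite /= Hti.
Qed.

Lemma lr_minI p i : (forall t, t < i -> nth 0 p i < nth 0 p t) -> lr_min p i.
Proof. by move=> H; apply/forallP => t; apply/implyP => /H. Qed.

Lemma not_lr_min p t : ~~ lr_min p t -> exists2 s, s < t & nth 0 p s <= nth 0 p t.
Proof.
move=> /forallPn[s]; rewrite negb_imply => /andP[H1 H2].
by exists s => //; rewrite leqNgt.
Qed.

Lemma lr_min_red p j : j < size p -> lr_min p j -> is_red p j.
Proof.
move=> Hj Hl; apply/negPn/negP => Hb.
have [a [b [H1 H2 Ra Rb /andP[H3 H4]]]] := blue_wit Hj Hb.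
have := lr_minE Hl (ltn_trans H1 H2) Hj; lia.
Qed.

Lemma letterA p j : j < size p -> (letter_at p j == LA) = lr_min p j.
Proof.
move=> Hj; rewrite /letter_at.
case Hl: (lr_min p j).
  rewrite andbF lr_min_red //.
  suff -> : red_lr_min p j by [].
  apply/forallP => t; apply/implyP => /andP[Ht _]; exact: (lr_minE Hl Ht Hj).
case: (rl_max p j) => //=.
case Hr: (is_red p j); last by case: blue_rl_max.
case Hm: (red_lr_min p j) => //.
exfalso; move/negbT: Hl => /negP; apply; apply: lr_minI => t Ht.
have Htn : t < size p by lia.
case Rt: (is_red p t).
  by move/forallP: Hm => /(_ (Ordinal Htn)) /=; rewrite Ht Rt.
have [a [b [H1 H2 Ra Rb /andP[H3 H4]]]] := blue_wit Htn (negbT Rt).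
have Han : a < size p by lia.
move/forallP: Hm => /(_ (Ordinal Han)) /=; rewrite Ra andbT.
have -> : a < j by lia.
move=> /= H5; lia.
Qed.

Lemma letterC p j : is_perm p -> j < size p -> letter_at p j = LC ->
  ~~ is_red p j /\ exists d, [/\ j < d, d < size p, ~~ is_red p d & nth 0 p j < nth 0 p d].
Proof.
move=> Hp Hj; rewrite /letter_at.
case: (rl_max p j && ~~ lr_min p j) => //.
case Hr: (is_red p j); first by case: red_lr_min.
case Hb: (blue_rl_max p j) => // _; split => //.
move/negbT: Hb => /forallPn[d]; rewrite negb_imply => /andP[/andP[H1 H2] H3].
exists d; split => //.
rewrite ltnNge in H3.
have Hne : nth 0 p j != nth 0 p d.
  apply/eqP => E; have := perm_inj Hp Hj (ltn_ord d) E; lia.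
lia.
Qed.

Lemma letterB p j : j < size p -> letter_at p j = LB -> is_red p j /\ ~~ lr_min p j.
Proof.
move=> Hj E; rewrite -letterA // E; split => //.
move: E; rewrite /letter_at.
case: (rl_max p j && ~~ lr_min p j) => //.
by case: (is_red p j) => //; case: blue_rl_max.
Qed.

Lemma lr_min_gap p a t : is_perm p -> lr_min p a -> a < t -> t < size p ->
  (forall s, a < s <= t -> ~~ lr_min p s) -> nth 0 p a < nth 0 p t.
Proof.
move=> Hp Ha; elim: t {-2}t (leqnn t) => [|N IH] t Ht Hat Htn Hs; first lia.
have [s Hst Hle] := not_lr_min (Hs t (ltac:(lia))).
have Han : a < size p by lia.
case: (ltngtP s a) => Hsa.
- have := lr_minE Ha Hsa Han; lia.
- have := IH s (ltac:(lia)) Hsa (ltac:(lia)) (fun s' H => Hs s' (ltac:(lia))); lia.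
- subst s; rewrite ltn_neqAle Hle andbT; apply/eqP => E.
  have := perm_inj Hp Han Htn E; lia.
Qed.


Lemma Aw_eq p : A_positions (wword p) = [seq j <- iota 0 (size p) | lr_min p j].
Proof.
rewrite /A_positions /wword size_mkseq; apply: eq_in_filter => j.
by rewrite mem_iota /= => Hj; rewrite nth_mkseq // letterA.
Qed.

Lemma index_lt p v : is_perm p -> v < size p -> index v.+1 p < size p.
Proof. by move=> Hp Hv; rewrite index_mem perm_memp //; lia. Qed.

Lemma Az_eq0 p : is_perm p ->
  A_positions (zword p) = [seq v <- iota 0 (size p) | lr_min p (index v.+1 p)].
Proof.
move=> Hp; rewrite /A_positions /zword size_mkseq; apply: eq_in_filter => v.
by rewrite mem_iota /= => Hv; rewrite nth_mkseq // letterA // index_lt.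
Qed.

Lemma Az_eq p : is_perm p ->
  A_positions (zword p) = rev [seq (nth 0 p t).-1 | t <- A_positions (wword p)].
Proof.
move=> Hp; rewrite Az_eq0 // Aw_eq.
apply: (irr_sorted_eq ltn_trans ltnn).
- by apply: sorted_filter; [apply: ltn_trans | apply: iota_ltn_sorted].
- rewrite rev_sorted sorted_map.
  apply: (sub_in_sorted (P := [pred t | (t < size p) && lr_min p t])
           (e := ltn)); last first.
  + by apply: sorted_filter; [apply: ltn_trans | apply: iota_ltn_sorted].
  + by apply/allP => t; rewrite mem_filter mem_iota /= andbC.
  move=> a b /andP[Ha La] /andP[Hb Lb] Hab /=.
  have := lr_minE Lb Hab Hb; have := perm_nth Hp Ha; have := perm_nth Hp Hb; lia.
- move=> v; rewrite mem_rev mem_filter mem_iota /=.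
  apply/andP/mapP.
  + case=> Hl Hv; exists (index v.+1 p).
      by rewrite mem_filter mem_iota Hl index_lt.
    by rewrite nth_index // perm_memp //; lia.
  + case=> t; rewrite mem_filter mem_iota => /andP[Lt Ht] ->.
    have := perm_nth Hp (ltac:(lia) : t < size p) => Hn.
    have -> : (nth 0 p t).-1.+1 = nth 0 p t by lia.
    rewrite index_uniq ?perm_uniqp //; split => //; lia.
Qed.

Lemma sorted_gap (s : seq nat) (q x : nat) : sorted ltn s -> q.+1 < size s -> x \in s ->
  nth 0 s q < x -> x < nth 0 s q.+1 -> False.
Proof.
move=> Hs Hq Hx H1 H2.
have Sl : sorted leq s by move: Hs; rewrite ltn_sorted_uniq_leq => /andP[].
have Hi : index x s < size s by rewrite index_mem.
have Hn := nth_index 0 Hx.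
have Hmono := sorted_leq_nth leq_trans leqnn 0 Sl.
case: (leqP (index x s) q) => Hc.
  have := Hmono (index x s) q Hi (ltnW Hq) Hc; rewrite Hn; lia.
have := Hmono q.+1 (index x s) Hq Hi Hc; rewrite Hn; lia.
Qed.

Lemma avoidsE p i1 i2 i3 i4 : avoids1324 p -> i1 < i2 -> i2 < i3 -> i3 < i4 ->
  i4 < size p -> nth 0 p i1 < nth 0 p i3 -> nth 0 p i3 < nth 0 p i2 ->
  nth 0 p i2 < nth 0 p i4 -> False.
Proof.
move=> /negP Ha H1 H2 H3 H4 H5 H6 H7; apply: Ha.
have O1 : i1 < size p by lia.
have O2 : i2 < size p by lia.
have O3 : i3 < size p by lia.
apply/existsP; exists (Ordinal O1); apply/existsP; exists (Ordinal O2).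
apply/existsP; exists (Ordinal O3); apply/existsP; exists (Ordinal H4).
by apply/and5P; split => //; apply/andP.
Qed.

Lemma count_window (T : Type) (P : pred T) (x0 : T) (l : seq T) s e :
  e <= size l ->
  count P (drop s (take e l)) = count (fun q => P (nth x0 l q)) (iota s (e - s)).
Proof.
move=> He.
rewrite -{1}(mkseq_nth x0 l) /mkseq -map_take -map_drop take_iota drop_iota count_map.
by have -> : minn e (size l) = e by lia.
Qed.


Ltac clean := repeat match goal with
 | H : is_true (is_red _ _) |- _ => clear H
 | H : is_true (~~ is_red _ _) |- _ => clear H
 | H : is_true (lr_min _ _) |- _ => clear H
 | H : is_true (~~ lr_min _ _) |- _ => clear H
 | H : is_true (_ \in _) |- _ => clear H
 | H : is_true (avoids1324 _) |- _ => clear H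
 | H : is_true (is_perm _) |- _ => clear H
 | H : is_true (sorted _ _) |- _ => clear H
 | H : is_true (~~ (_ == _)) |- _ => move/eqP: H => H
 end.
Ltac slia := clean; lia.

Unset Implicit Arguments.
Theorem lemma4p1 (p : seq nat) (i k : nat) :
  is_perm p -> avoids1324 p ->
  (1 <= i)%N -> (1 <= k)%N ->
  (i <= size (A_positions (wword p)))%N ->
  (* m = position of the i-th letter A from the right in w(p) *)
  let m := nth 0 (rev (A_positions (wword p))) i.-1 in
  (0 < m)%N ->
  drop m.-1 (take (m + k).+1 (wword p)) = LC :: LA :: nseq k LB ->
  (i <= size (A_positions (zword p)))%N /\
  (k <= count_mem LB (segment (zword p) i))%N.
Proof.
move=> Hp Hav Hi Hk HiN m Hm Hw.
set Aw := A_positions (wword p) in HiN m Hm Hw *.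
have HAz := Az_eq Hp; rewrite -/Aw in HAz.
have Hsz : size (A_positions (zword p)) = size Aw by rewrite HAz size_rev size_map.
split; first by rewrite Hsz.
have AwE : Aw = [seq j <- iota 0 (size p) | lr_min p j] by rewrite /Aw Aw_eq.
have Awsort : sorted ltn Aw.
  by rewrite AwE; apply: sorted_filter; [apply: ltn_trans | apply: iota_ltn_sorted].
have memAw : forall t : nat, (t \in Aw) = (t < (size p)) && lr_min p t.
  by move=> t; rewrite AwE mem_filter mem_iota andbC.
have mE : m = nth 0 Aw (size Aw - i).
  rewrite /m nth_rev; [congr nth; slia | slia].
have mAw : m \in Aw.
  by rewrite mE mem_nth // ltn_subrL Hi (leq_trans Hi HiN).
move: (mAw); rewrite memAw => /andP[Hmn Lm].
clearbody m Aw.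
have Hwn : forall q, q <= k.+1 ->
    nth LA (wword p) (m.-1 + q) = nth LA (LC :: LA :: nseq k LB) q.
  move=> q Hq; rewrite -Hw nth_drop nth_take //; slia.
have Hsize : m + k < (size p).
  have := congr1 size Hw; rewrite size_drop size_take /wword size_mkseq /=.
  rewrite size_nseq; case: ifP; slia.
have wE : forall t, t < (size p) -> nth LA (wword p) t = letter_at p t.
  by move=> t Ht; rewrite /wword nth_mkseq.
have LC1 : letter_at p m.-1 = LC.
  by have := Hwn 0 (ltac:(slia)); rewrite addn0 wE //; slia.
have LBj : forall j, 1 <= j <= k -> letter_at p (m + j) = LB.
  move=> j Hj; have := Hwn j.+1 (ltac:(slia)).
  rewrite wE; last by slia.
  have -> : m.-1 + j.+1 = m + j by slia.
  case: j Hj => [|j] Hj; first slia.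
  by rewrite /= nth_nseq; case: ifP => //; slia.
have Rm : is_red p m := lr_min_red Hmn Lm.
have RB : forall j, 1 <= j <= k -> is_red p (m + j) /\ ~~ lr_min p (m + j).
  move=> j Hj; apply: letterB; [slia | exact: LBj].
have Hm1n : m.-1 < (size p) by slia.
have [Bc [d [Hd1 Hdn Bd Hcd]]] := letterC Hp Hm1n LC1.
have NLc : ~~ lr_min p m.-1 by rewrite -letterA // LC1.
have Hdk : m + k < d.
  case: (ltnP (m + k) d) => // Hle; exfalso.
  case: (ltngtP d m) => Hdm; first slia.
    have [Rd _] := RB (d - m) (ltac:(slia)).
    have E : m + (d - m) = d by slia.
    by rewrite E in Rd; rewrite Rd in Bd.
  by rewrite Hdm Rm in Bd.
have y_gt : forall j, 1 <= j <= k -> nth 0 p m < nth 0 p (m + j).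
  move=> j Hj; apply: (lr_min_gap Hp Lm); [slia | slia | ].
  move=> s Hs; have [_ H] := RB (s - m) (ltac:(slia)).
  have E : m + (s - m) = s by slia.
  by rewrite E in H.
have y_lt : i < size Aw -> forall j, 1 <= j <= k ->
    nth 0 p (m + j) < nth 0 p (nth 0 Aw (size Aw - i).-1).
  move=> HiN' j Hj.
  set r := size Aw - i.
  have Hr : 0 < r by rewrite /r subn_gt0.
  have Hrs : r < size Aw by rewrite /r ltn_subrL Hi (leq_trans Hi HiN).
  set m' := nth 0 Aw r.-1.
  have mE' : m = nth 0 Aw r.-1.+1 by rewrite mE prednK.
  have m'Aw : m' \in Aw by rewrite mem_nth // (leq_ltn_trans (leq_pred r) Hrs).
  move: (m'Aw); rewrite memAw => /andP[Hm'n Lm'].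
  have Hm'm : m' < m.
    rewrite mE' /m'; apply: (sorted_ltn_nth ltn_trans) => //.
      by rewrite inE (leq_ltn_trans (leq_pred r) Hrs).
    by rewrite inE prednK.
  have gap : forall s, m' < s < m -> ~~ lr_min p s.
    move=> s /andP[H1 H2]; apply/negP => Ls.
    have Ss : s \in Aw by rewrite memAw Ls andbT; slia.
    apply: (sorted_gap (q := r.-1) Awsort _ Ss) => //.
      by rewrite prednK.
    by rewrite -mE'.
  have Hm'm1 : m' < m.-1.
    case: (ltngtP m' m.-1) => // H; first slia.
    by move: NLc; rewrite -H Lm'.
  have Huc : nth 0 p m' < nth 0 p m.-1.
    apply: (lr_min_gap Hp Lm') => //.
    move=> s Hs; apply: gap; slia.
  have [Ry _] := RB j Hj.
  have Hyn : m + j < (size p) by slia.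
  have ne1 : nth 0 p (m + j) != nth 0 p m'.
    by apply/eqP => E; have := perm_inj Hp Hyn Hm'n E; slia.
  have ne2 : nth 0 p (m + j) != nth 0 p m.-1.
    by apply/eqP => E; have := perm_inj Hp Hyn Hm1n E; slia.
  case: (ltnP (nth 0 p (m + j)) (nth 0 p m.-1)) => Hyc.
    case: (ltnP (nth 0 p (m + j)) (nth 0 p m')) => // Hyu; exfalso.
    apply: (avoidsE (i1 := m') (i2 := m.-1) (i3 := m + j) (i4 := d) Hav); slia.
  exfalso.
  have [a [b [Hab Hbc Ra Rb /andP[Hac Hcb]]]] := blue_wit Hm1n Bc.
  have Hbn : b < (size p) by slia.
  have ne3 : nth 0 p (m + j) != nth 0 p b.
    by apply/eqP => E; have := perm_inj Hp Hyn Hbn E; slia.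
  case: (ltnP (nth 0 p (m + j)) (nth 0 p b)) => Hyb.
    have := red_no Ry Hab (ltac:(slia) : b < m + j) Ra Rb.
    have Hay : nth 0 p a < nth 0 p (m + j) by slia.
    by rewrite Hay Hyb.
  apply: (avoidsE (i1 := a) (i2 := b) (i3 := m.-1) (i4 := m + j) Hav); slia.
have zsz : size (zword p) = size p by rewrite /zword size_mkseq.
have zE : forall v, v < size p -> nth LA (zword p) v = letter_at p (index v.+1 p).
  by move=> v Hv; rewrite /zword nth_mkseq.
rewrite /segment /= Hsz.
have sE : nth 0 (A_positions (zword p)) i.-1 = (nth 0 p m).-1.
  rewrite HAz nth_rev ?size_map; last by slia.
  rewrite (nth_map 0); last by slia.
  have -> : size Aw - i.-1.+1 = size Aw - i by slia.
  by rewrite -mE.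
rewrite sE.
set e := (if i < size Aw then _ else _).
have Hyv : forall j, 0 < j <= k -> 0 < nth 0 p (m + j) <= size p.
  move=> j Hj; apply: perm_nth => //; slia.
have He : e <= size p /\ forall j, 0 < j <= k -> (nth 0 p (m + j)).-1 < e.
  rewrite /e; case: ifP => HiA; last first.
    rewrite zsz; split => // j Hj; have := Hyv j Hj; slia.
  have Hx : nth 0 Aw (size Aw - i).-1 \in Aw.
    by rewrite mem_nth // (leq_ltn_trans (leq_pred _)) // ltn_subrL Hi (leq_trans Hi HiN).
  move: Hx; rewrite memAw => /andP[Hx _].
  have eE : nth 0 (A_positions (zword p)) i = (nth 0 p (nth 0 Aw (size Aw - i).-1)).-1.
    rewrite HAz nth_rev ?size_map //.
    rewrite (nth_map 0); last by slia.
    have -> : size Aw - i.+1 = (size Aw - i).-1 by slia.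
    done.
  rewrite eE; split.
    have := perm_nth Hp Hx; slia.
  move=> j Hj; have := y_lt HiA j Hj; have := Hyv j Hj; slia.
case: He => He1 He2.
rewrite (count_window _ LA); last by rewrite zsz.
rewrite -size_filter.
apply: leq_trans (uniq_leq_size (s1 := [seq (nth 0 p (m + j)).-1 | j <- iota 1 k]) _ _).
- by rewrite size_map size_iota.
- rewrite map_inj_in_uniq ?iota_uniq // => j1 j2; rewrite !mem_iota => H1 H2 E.
  have Hj1 : 0 < j1 <= k by slia.
  have Hj2 : 0 < j2 <= k by slia.
  have := Hyv j1 Hj1; have := Hyv j2 Hj2 => A2 A1.
  have E' : nth 0 p (m + j1) = nth 0 p (m + j2) by slia.
  have Ha1 : m + j1 < size p by slia.
  have Ha2 : m + j2 < size p by slia.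
  have := perm_inj Hp Ha1 Ha2 E'; slia.
- move=> x /mapP[j]; rewrite mem_iota => Hj0 ->.
  have Hj : 0 < j <= k by slia.
  have := Hyv j Hj => Hy.
  have := He2 j Hj => Hye.
  have := y_gt j Hj => Hyg.
  rewrite mem_filter mem_iota; apply/andP; split; last by slia.
  rewrite /= zE; last by slia.
  have -> : (nth 0 p (m + j)).-1.+1 = nth 0 p (m + j) by slia.
  have Hmj : m + j < size p.
    by apply: leq_ltn_trans Hsize; rewrite leq_add2l; case/andP: Hj.
  rewrite index_uniq ?perm_uniqp //.
  by rewrite LBj.
Qed.
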